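(* The special monoid $\Pi_2=\langle a,b,c\mid (ab^ic)^2=1\ (i\geq 1)\rangle$ has context-free word problem, and its group of units is not finitely generated.
   Context: For a monoid $M$ with finite generating set $A$, the word problem of $M$ with respect to $A$ is the language $\{u\#v^{\mathrm{rev}} \mid u,v\in A^\ast,\ u=_M v\}$, where $\#\notin A$ and $v^{\mathrm{rev}}$ is the reversal of $v$; $M$ has context-free word problem if this language is context-free. The group of units of $M$ is the set of elements having both a left and a right inverse. A monoid is special if it has a presentation in which all defining relations are of the form $w=1$. *)

(* Defs.v *)
From Stdlib Require Import List.
Import ListNotations.

Inductive gen : Type := ga | gb | gc.

Definition word := list gen.

Definition abic (i : nat) : word := [ga] ++ repeat gb i ++ [gc].

Inductive pi2_rel : word -> word -> Prop :=
| pi2_rel_intro (i : nat) : 1 <= i -> pi2_rel (abic i ++ abic i) [].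

Inductive pi2_eq : word -> word -> Prop :=
| pi2_refl u : pi2_eq u u
| pi2_step u v l r : pi2_rel l r -> pi2_eq (u ++ l ++ v) (u ++ r ++ v)
| pi2_sym u v : pi2_eq u v -> pi2_eq v u
| pi2_trans u v w : pi2_eq u v -> pi2_eq v w -> pi2_eq u w.

Definition pi2_unit (u : word) : Prop :=
  (exists v, pi2_eq (v ++ u) []) /\ (exists v, pi2_eq (u ++ v) []).

Definition inverse_of_some (S : list word) (w : word) : Prop :=
  exists s, In s S /\ pi2_eq (s ++ w) [] /\ pi2_eq (w ++ s) [].

Definition pi2_units_fin_gen : Prop :=
  exists S : list word,
    (forall s, In s S -> pi2_unit s) /\
    (forall x, pi2_unit x ->
       exists ws : list word,
         (forall w, In w ws -> In w S \/ inverse_of_some S w) /\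
         pi2_eq x (concat ws)).

Record cfg (T : Type) : Type := CFG {
  cfg_prods : list (nat * list (nat + T));
  cfg_start : nat
}.

Arguments cfg_prods {T} _.
Arguments cfg_start {T} _.

Inductive derives {T : Type} (G : cfg T) : list (nat + T) -> list T -> Prop :=
| der_nil : derives G [] []
| der_term t s w : derives G s w -> derives G (inr t :: s) (t :: w)
| der_nt X rhs s w1 w2 :
    In (X, rhs) (cfg_prods G) -> derives G rhs w1 -> derives G s w2 ->
    derives G (inl X :: s) (w1 ++ w2).

Definition cfg_lang {T : Type} (G : cfg T) (w : list T) : Prop :=
  derives G [inl (cfg_start G)] w.

Definition context_free {T : Type} (L : list T -> Prop) : Prop :=
  exists G : cfg T, forall w, L w <-> cfg_lang G w.

(** The word problem of Pi_2 w.r.t. {a,b,c}, over the alphabet {a,b,c,#}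
    where [None] plays the role of #:  { u # v^rev | u =_{Pi_2} v }. *)
Definition pi2_word_problem (w : list (option gen)) : Prop :=
  exists u v : word,
    w = map Some u ++ None :: map Some (rev v) /\ pi2_eq u v.

(* Main.v *)
Require Import Defs.
From Stdlib Require Import List Lia Arith.
Import ListNotations.


Ltac lnorm := repeat progress (simpl; rewrite ?rev_app_distr, ?rev_repeat, <- ?app_assoc).

Definition rel (j : nat) : word := abic j ++ abic j.
Arguments rel : simpl never.

Lemma pi2_ctx : forall a b, pi2_eq a b -> forall u v, pi2_eq (u ++ a ++ v) (u ++ b ++ v).
Proof.
  induction 1; intros.
  - apply pi2_refl.
  - replace (u0 ++ (u ++ l ++ v) ++ v0) with ((u0 ++ u) ++ l ++ (v ++ v0)) by (repeat rewrite <- app_assoc; reflexivity).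
    replace (u0 ++ (u ++ r ++ v) ++ v0) with ((u0 ++ u) ++ r ++ (v ++ v0)) by (repeat rewrite <- app_assoc; reflexivity).
    apply pi2_step; auto.
  - apply pi2_sym; auto.
  - eapply pi2_trans; eauto.
Qed.

Lemma pi2_app : forall a b c d, pi2_eq a b -> pi2_eq c d -> pi2_eq (a ++ c) (b ++ d).
Proof.
  intros. apply pi2_trans with (b ++ c).
  - pose proof (pi2_ctx a b H [] c). simpl in H1. exact H1.
  - pose proof (pi2_ctx c d H0 b []). rewrite !app_nil_r in H1. exact H1.
Qed.

Lemma pi2_rel_nil : forall j, 1 <= j -> pi2_eq (rel j) [].
Proof.
  intros. pose proof (pi2_step [] [] _ _ (pi2_rel_intro j H)).
  simpl in H0. rewrite app_nil_r in H0. exact H0.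
Qed.

Lemma pi2_del : forall x y j, 1 <= j -> pi2_eq (x ++ rel j ++ y) (x ++ y).
Proof.
  intros. pose proof (pi2_ctx _ _ (pi2_rel_nil j H) x y). simpl in H0. exact H0.
Qed.

Ltac in_contra := exfalso; match goal with H : ~ In _ _ |- _ => apply H; solve [apply in_elt | apply in_eq | apply in_or_app; right; apply in_eq] end.

Lemma split1 : forall (A:Type) (x:A) l1 r1 l2 r2,
  l1 ++ x :: r1 = l2 ++ x :: r2 -> ~ In x r1 -> ~ In x r2 -> l1 = l2 /\ r1 = r2.
Proof.
  intros. apply app_eq_app in H. destruct H as [l [[H2 H3]|[H2 H3]]].
  - destruct l as [|y l].
    + rewrite app_nil_r in H2. simpl in H3. inversion H3. auto.
    + simpl in H3. inversion H3; subst. in_contra.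
  - destruct l as [|y l].
    + rewrite app_nil_r in H2. simpl in H3. inversion H3. auto.
    + simpl in H3. inversion H3; subst. in_contra.
Qed.

Lemma split2 : forall (A:Type) (x:A) l1 r1 l2 r2,
  l1 ++ x :: r1 = l2 ++ x :: r2 -> ~ In x l1 -> ~ In x l2 -> l1 = l2 /\ r1 = r2.
Proof.
  intros. apply app_eq_app in H. destruct H as [l [[H2 H3]|[H2 H3]]].
  - destruct l as [|y l].
    + rewrite app_nil_r in H2. simpl in H3. inversion H3. auto.
    + simpl in H3. inversion H3; subst. in_contra.
  - destruct l as [|y l].
    + rewrite app_nil_r in H2. simpl in H3. inversion H3. auto.
    + simpl in H3. inversion H3; subst. in_contra.
Qed.

Lemma notin_repeat : forall (x y : gen) n, x <> y -> ~ In x (repeat y n).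
Proof. intros x y n H Hin. apply repeat_spec in Hin. auto. Qed.

Lemma repeat_inj : forall (x:gen) n m, repeat x n = repeat x m -> n = m.
Proof. intros. rewrite <- (repeat_length x n), <- (repeat_length x m). rewrite H. auto. Qed.

Lemma brun_a : forall j j' X Y, repeat gb j ++ ga :: X = repeat gb j' ++ ga :: Y -> j = j' /\ X = Y.
Proof.
  intros. apply split2 in H; try (apply notin_repeat; discriminate).
  destruct H. split; auto. apply repeat_inj in H; auto.
Qed.

Lemma brun_c : forall j j' X Y, repeat gb j ++ gc :: X = repeat gb j' ++ gc :: Y -> j = j' /\ X = Y.
Proof.
  intros. apply split2 in H; try (apply notin_repeat; discriminate).
  destruct H. split; auto. apply repeat_inj in H; auto.
Qed.

Lemma abic_app_inj : forall j j' X Y, abic j ++ X = abic j' ++ Y -> j = j' /\ X = Y.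
Proof.
  unfold abic. intros. simpl in H. inversion H. repeat rewrite <- app_assoc in H1. simpl in H1.
  apply brun_c in H1. auto.
Qed.

Fixpoint split_b (l : list gen) : nat * list gen :=
  match l with
  | gb :: t => let (n, r) := split_b t in (S n, r)
  | _ => (0, l)
  end.

Fixpoint strip_b (n : nat) (l : list gen) : option (list gen) :=
  match n, l with
  | 0, l => Some l
  | S n, gb :: t => strip_b n t
  | _, _ => None
  end.

Definition reduce_c (rs : list gen) : option (list gen) :=
  let (j, r) := split_b rs in
  match j with
  | 0 => None
  | S _ => match r with
           | ga :: gc :: r2 => match strip_b j r2 with
                               | Some (ga :: r3) => Some r3
                               | _ => None end
           | _ => None end
  end.

Definition pushr (rs : list gen) (x : gen) : list gen :=
  match x with
  | gc => match reduce_c rs with Some r => r | None => gc :: rs end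
  | _ => x :: rs
  end.

Definition nfr (w : word) : list gen := fold_left pushr w [].
Definition nf (w : word) : word := rev (nfr w).

Lemma split_b_spec : forall l n r, split_b l = (n, r) -> l = repeat gb n ++ r /\ (forall t, r <> gb :: t).
Proof.
  induction l; simpl; intros.
  - inversion H; subst. split; auto. discriminate.
  - destruct a.
    + inversion H; subst. split; auto. discriminate.
    + destruct (split_b l) as [n0 r0] eqn:E. inversion H; subst.
      destruct (IHl _ _ eq_refl). subst. split; auto.
    + inversion H; subst. split; auto. discriminate.
Qed.

Lemma split_b_repeat : forall n t, (forall t', t <> gb :: t') -> split_b (repeat gb n ++ t) = (n, t).
Proof.
  induction n; simpl; intros.
  - destruct t as [|[] t]; simpl; auto. exfalso. eapply H; eauto.
  - rewrite IHn; auto.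
Qed.

Lemma strip_b_spec : forall n l r, strip_b n l = Some r -> l = repeat gb n ++ r.
Proof.
  induction n; simpl; intros.
  - inversion H; auto.
  - destruct l as [|[] l]; try discriminate. rewrite (IHn _ _ H). auto.
Qed.

Lemma strip_b_repeat : forall n r, strip_b n (repeat gb n ++ r) = Some r.
Proof. induction n; simpl; auto. Qed.

Definition relR (j : nat) (r : list gen) : list gen :=
  repeat gb j ++ ga :: gc :: repeat gb j ++ ga :: r.

Lemma reduce_c_spec : forall rs r, reduce_c rs = Some r -> exists j, 1 <= j /\ rs = relR j r.
Proof.
  unfold reduce_c. intros rs r H. destruct (split_b rs) as [n r0] eqn:E.
  apply split_b_spec in E. destruct E as [E1 _]. subst.
  destruct n; try discriminate.
  destruct r0 as [|[] [|[] r2]]; try discriminate.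
  destruct (strip_b (S n) r2) eqn:E2; try discriminate.
  destruct l as [|[] l]; try discriminate. inversion H; subst.
  apply strip_b_spec in E2. subst. exists (S n). split. lia. reflexivity.
Qed.

Lemma reduce_c_relR : forall j r, 1 <= j -> reduce_c (relR j r) = Some r.
Proof.
  intros. unfold reduce_c, relR. rewrite split_b_repeat by discriminate.
  destruct j; try lia. rewrite strip_b_repeat. reflexivity.
Qed.

Lemma rev_relR : forall j r, rev (relR j r) ++ [gc] = rev r ++ rel j.
Proof.
  intros. unfold relR, rel, abic. lnorm. reflexivity.
Qed.

Definition irr (z : word) : Prop := forall p q j, 1 <= j -> z <> p ++ rel j ++ q.

Definition relm (j : nat) : word := [ga] ++ repeat gb j ++ [gc] ++ [ga] ++ repeat gb j.
Lemma rel_relm : forall j, rel j = relm j ++ [gc].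
Proof. intros. unfold rel, relm, abic. lnorm. reflexivity. Qed.
Lemma rev_relR' : forall j r, rev (relR j r) = rev r ++ relm j.
Proof. intros. unfold relR, relm. lnorm. reflexivity. Qed.

Lemma irr_prefix : forall z z', irr (z ++ z') -> irr z.
Proof. unfold irr. intros. intro. subst. apply (H p (q ++ z') j H0). repeat rewrite <- app_assoc. auto. Qed.

Lemma irr_suffix : forall z z', irr (z ++ z') -> irr z'.
Proof. unfold irr. intros. intro. subst. apply (H (z ++ p) q j H0). repeat rewrite <- app_assoc. auto. Qed.

Lemma rel_last : forall j, exists m, rel j = m ++ [gc].
Proof. intros. unfold rel, abic. exists ([ga] ++ repeat gb j ++ [gc] ++ [ga] ++ repeat gb j). repeat rewrite <- app_assoc. auto. Qed.

Lemma pushr_irr : forall rs x, irr (rev rs) -> irr (rev (pushr rs x)).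
Proof.
  intros rs x H. unfold pushr.
  assert (Hnored : x = gc -> reduce_c rs = None -> irr (rev (x :: rs)) ) .
  { intros -> Hn p q j Hj Heq. change (rev (gc :: rs)) with (rev rs ++ [gc]) in Heq.
    destruct q as [|y q] using rev_ind.
    - rewrite app_nil_r, rel_relm, app_assoc in Heq.
      apply app_inj_tail in Heq. destruct Heq as [Heq _].
      assert (rs = relR j (rev p)).
      { rewrite <- (rev_involutive rs), Heq, <- (rev_involutive (relR j (rev p))), rev_relR', rev_involutive. reflexivity. }
      rewrite H0, reduce_c_relR in Hn by auto. discriminate.
    - rewrite !app_assoc in Heq. apply app_inj_tail in Heq. destruct Heq as [Heq _].
      apply (H p q j Hj). rewrite Heq, <- !app_assoc. auto. }
  assert (Hother : x <> gc -> irr (rev (x :: rs))).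
  { intros Hx p q j Hj Heq. change (rev (x :: rs)) with (rev rs ++ [x]) in Heq.
    destruct q as [|y q] using rev_ind.
    - rewrite app_nil_r in Heq. destruct (rel_last j) as [m Hm]. rewrite Hm, app_assoc in Heq.
      apply app_inj_tail in Heq. destruct Heq; auto.
    - rewrite !app_assoc in Heq. apply app_inj_tail in Heq. destruct Heq as [Heq _].
      apply (H p q j Hj). rewrite Heq, <- !app_assoc. auto. }
  destruct x; try (apply Hother; discriminate).
  destruct (reduce_c rs) eqn:E; [|apply Hnored; auto].
  apply reduce_c_spec in E. destruct E as [j [Hj E]]. subst rs.
  rewrite rev_relR' in H. apply irr_prefix in H. exact H.
Qed.

Lemma fold_irr : forall w rs, irr (rev rs) -> irr (rev (fold_left pushr w rs)).
Proof. induction w; simpl; intros; auto. apply IHw. apply pushr_irr. auto. Qed.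

Lemma nf_irr : forall w, irr (nf w).
Proof. intros. unfold nf, nfr. apply fold_irr. simpl. intros p q j Hj H. destruct p; discriminate. Qed.

Lemma push_repeat_b : forall n rs, fold_left pushr (repeat gb n) rs = repeat gb n ++ rs.
Proof.
  induction n; simpl; intros; auto. rewrite IHn.
  replace (gb :: rs) with ([gb] ++ rs) by auto. rewrite app_assoc, <- repeat_cons. reflexivity.
Qed.

Lemma push_abic : forall j rs, fold_left pushr (abic j) rs =
  match reduce_c (repeat gb j ++ ga :: rs) with Some r => r | None => gc :: repeat gb j ++ ga :: rs end.
Proof.
  intros. unfold abic. rewrite !fold_left_app. simpl. rewrite push_repeat_b. reflexivity.
Qed.

Lemma reduce_abic : forall j rs r, 1 <= j -> reduce_c (repeat gb j ++ ga :: rs) = Some r ->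
  rs = gc :: repeat gb j ++ ga :: r.
Proof.
  intros. apply reduce_c_spec in H0. destruct H0 as [j' [Hj' E]]. unfold relR in E.
  apply brun_a in E. destruct E; subst. auto.
Qed.

Lemma push_rel_irr : forall j rs, 1 <= j -> irr (rev rs) -> fold_left pushr (rel j) rs = rs.
Proof.
  intros. unfold rel. rewrite fold_left_app, (push_abic j rs).
  destruct (reduce_c (repeat gb j ++ ga :: rs)) eqn:E.
  - apply reduce_abic in E; auto. subst rs. rewrite push_abic.
    destruct (reduce_c (repeat gb j ++ ga :: l)) eqn:E2; auto.
    apply reduce_abic in E2; auto. subst l. exfalso.
    apply (H0 (rev l0) [] j H).
    change (rev (gc :: relR j l0) = rev l0 ++ rel j ++ []).
    change (rev (gc :: relR j l0)) with (rev (relR j l0) ++ [gc]).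
    rewrite rev_relR', app_nil_r, rel_relm, app_assoc. reflexivity.
  - rewrite push_abic. replace (repeat gb j ++ ga :: gc :: repeat gb j ++ ga :: rs) with (relR j rs) by reflexivity.
    rewrite reduce_c_relR; auto.
Qed.

Lemma nfr_app : forall u v, nfr (u ++ v) = fold_left pushr v (nfr u).
Proof. intros. unfold nfr. apply fold_left_app. Qed.

Lemma nfr_irr : forall w, irr (rev (nfr w)).
Proof. apply nf_irr. Qed.

Lemma nf_eq : forall u v, pi2_eq u v -> nf u = nf v.
Proof.
  induction 1; auto.
  - inversion H; subst. unfold nf. f_equal.
    rewrite !nfr_app. change (abic i ++ abic i) with (rel i). simpl app.
    rewrite (fold_left_app pushr (rel i) v). rewrite push_rel_irr; auto. apply nfr_irr.
  - congruence.
Qed.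

Inductive red : word -> word -> Prop :=
| red_refl u : red u u
| red_del x y j z : 1 <= j -> red (x ++ y) z -> red (x ++ rel j ++ y) z.

Lemma red_fold : forall w rs, red (rev rs ++ w) (rev (fold_left pushr w rs)).
Proof.
  induction w; intros; simpl.
  - rewrite app_nil_r. constructor.
  - unfold pushr at 2. destruct a.
    + replace (rev rs ++ ga :: w) with (rev (ga :: rs) ++ w) by (simpl; rewrite <- app_assoc; auto). apply IHw.
    + replace (rev rs ++ gb :: w) with (rev (gb :: rs) ++ w) by (simpl; rewrite <- app_assoc; auto). apply IHw.
    + destruct (reduce_c rs) eqn:E.
      * apply reduce_c_spec in E. destruct E as [j [Hj E]]. subst rs.
        replace (rev (relR j l) ++ gc :: w) with (rev l ++ rel j ++ w).
        -- apply red_del; auto.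
        -- rewrite app_assoc, <- rev_relR, <- app_assoc. reflexivity.
      * replace (rev rs ++ gc :: w) with (rev (gc :: rs) ++ w) by (simpl; rewrite <- app_assoc; auto). apply IHw.
Qed.

Lemma red_nf : forall w, red w (nf w).
Proof. intros. apply (red_fold w []). Qed.

Lemma red_pi2 : forall u z, red u z -> pi2_eq u z.
Proof.
  induction 1. apply pi2_refl. eapply pi2_trans; [apply pi2_del; auto | auto].
Qed.

Lemma red_len : forall u z, red u z -> length z <= length u.
Proof. induction 1; auto. rewrite !length_app in *. lia. Qed.

Lemma pi2_nf : forall w, pi2_eq w (nf w).
Proof. intros. apply red_pi2, red_nf. Qed.

Inductive Ep : word -> Prop :=
| Ep_nil : Ep []
| Ep_blk j w1 w2 : 1 <= j -> Slp (rel j) w1 -> Ep w2 -> Ep (w1 ++ w2)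
with Slp : word -> word -> Prop :=
| Slp_nil e : Ep e -> Slp [] e
| Slp_cons t s e w : Ep e -> Slp s w -> Slp (t :: s) (e ++ t :: w).

Scheme Ep_ind2 := Induction for Ep Sort Prop
with Slp_ind2 := Induction for Slp Sort Prop.
Combined Scheme Ep_mut from Ep_ind2, Slp_ind2.

Lemma Slp_triv : forall s, Slp s s.
Proof.
  induction s. constructor; constructor.
  change (a :: s) with ([] ++ a :: s). constructor; auto. constructor.
Qed.

Lemma ins_lemma : forall i, 1 <= i ->
  (forall w, Ep w -> forall x y, w = x ++ y -> Ep (x ++ rel i ++ y)) /\
  (forall s w, Slp s w -> forall x y, w = x ++ y -> Slp s (x ++ rel i ++ y)).
Proof.
  intros i Hi. apply (Ep_mut
    (fun w _ => forall x y, w = x ++ y -> Ep (x ++ rel i ++ y))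
    (fun s w _ => forall x y, w = x ++ y -> Slp s (x ++ rel i ++ y))).
  - intros x y H. symmetry in H. apply app_eq_nil in H. destruct H; subst.
    change (Ep (rel i ++ [])). apply Ep_blk with (j := i); auto. apply Slp_triv. constructor.
  - intros j w1 w2 Hj S1 IH1 E2 IH2 x y H.
    apply app_eq_app in H. destruct H as [l [[H1 H2]|[H1 H2]]].
    + subst. replace (x ++ rel i ++ l ++ w2) with ((x ++ rel i ++ l) ++ w2) by (repeat rewrite <- app_assoc; auto).
      apply Ep_blk with (j := j); auto.
    + subst. rewrite <- app_assoc. apply Ep_blk with (j := j); auto.
  - intros e E IH x y H. constructor. apply IH. auto.
  - intros t s e w E IHe S IHs x y H.
    apply app_eq_app in H. destruct H as [l [[H1 H2]|[H1 H2]]].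
    + subst. replace (x ++ rel i ++ l ++ t :: w) with ((x ++ rel i ++ l) ++ t :: w) by (repeat rewrite <- app_assoc; auto).
      constructor; auto.
    + destruct l as [|z l].
      * rewrite app_nil_r in H1. subst. simpl in H2. subst.
        rewrite app_assoc. constructor; auto. rewrite <- (app_nil_r (rel i)). apply IHe. rewrite app_nil_r; auto.
      * simpl in H2. inversion H2; subst.
        replace ((e ++ z :: l) ++ rel i ++ y) with (e ++ z :: (l ++ rel i ++ y)) by (repeat rewrite <- app_assoc; reflexivity).
        constructor; auto.
Qed.

Lemma Slp_ins : forall s i x y, 1 <= i -> Slp s (x ++ y) -> Slp s (x ++ rel i ++ y).
Proof. intros. destruct (ins_lemma i H) as [_ H2]. eapply H2; eauto. Qed.

Lemma red_Slp : forall u z, red u z -> Slp z u.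
Proof.
  induction 1. apply Slp_triv. apply Slp_ins; auto.
Qed.

Lemma Slp_nf : forall u, Slp (nf u) u.
Proof. intros. apply red_Slp, red_nf. Qed.

Definition sym := (nat + option gen)%type.
Definition N (k : nat) : sym := inl k.
Definition T (x : gen) : sym := inr (Some x).
Definition Hs : sym := inr None.

Definition prods : list (nat * list sym) :=
  [ (0, [N 1; Hs; N 3]);
    (0, [N 1; T ga; N 0; T ga; N 3]);
    (0, [N 1; T gb; N 0; T gb; N 3]);
    (0, [N 1; T gc; N 0; T gc; N 3]);
    (1, []);
    (1, [N 1; T ga; N 2; T gc; N 1; N 1]);
    (2, [N 1; T gb; N 2; T gb; N 1]);
    (2, [N 1; T gb; N 1; T gc; N 1; T ga; N 1; T gb; N 1]);
    (3, []);
    (3, [N 3; N 3; T gc; N 4; T ga; N 3]);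
    (4, [N 3; T gb; N 4; T gb; N 3]);
    (4, [N 3; T gb; N 3; T ga; N 3; T gc; N 3; T gb; N 3]) ].

Definition G : cfg (option gen) := CFG _ prods 0.

Lemma derives_app : forall s1 s2 w1 w2, derives G s1 w1 -> derives G s2 w2 -> derives G (s1 ++ s2) (w1 ++ w2).
Proof.
  intros s1 s2 w1 w2 H. revert s2 w2. induction H; intros; simpl; auto.
  - constructor. auto.
  - rewrite <- app_assoc. econstructor; eauto.
Qed.

Lemma derives_app_inv : forall s1 s2 w, derives G (s1 ++ s2) w ->
  exists w1 w2, w = w1 ++ w2 /\ derives G s1 w1 /\ derives G s2 w2.
Proof.
  induction s1; simpl; intros.
  - exists [], w. repeat split; auto. constructor.
  - inversion H as [|t s w' D|X rhs s w1' w2' Hin Drhs D]; subst.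
    + destruct (IHs1 _ _ D) as (w1 & w2 & -> & D1 & D2).
      exists (t :: w1), w2. repeat split; auto. constructor; auto.
    + destruct (IHs1 _ _ D) as (w3 & w4 & -> & D1 & D2).
      exists (w1' ++ w3), w4. repeat split; auto. rewrite app_assoc; auto. econstructor; eauto.
Qed.

Lemma derives_nt : forall X rhs w, In (X, rhs) prods -> derives G rhs w -> derives G [inl X] w.
Proof. intros. rewrite <- (app_nil_r w). econstructor; eauto. constructor. Qed.

Lemma derives_t : forall x, derives G [inr x] [x].
Proof. intros. constructor. constructor. Qed.

Definition tw (x : sym) : sym :=
  match x with
  | inl 1 => inl 3 | inl 3 => inl 1 | inl 2 => inl 4 | inl 4 => inl 2 | _ => x end.

Fixpoint slotform (s : word) : list sym :=
  match s with [] => [N 1] | t :: s' => N 1 :: T t :: slotform s' end.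

Definition fm (l : word) : list sym := flat_map (fun t => [N 1; T t]) l.

Lemma sf_app : forall l s, slotform (l ++ s) = fm l ++ slotform s.
Proof. induction l; simpl; intros; auto. rewrite IHl. auto. Qed.

Definition zform (j : nat) : list sym := fm (repeat gb j) ++ [N 1; T gc; N 1; T ga] ++ fm (repeat gb j) ++ [N 1].

Lemma sf_rel : forall j, slotform (rel j) = [N 1; T ga] ++ zform j ++ [T gc; N 1].
Proof.
  intros. unfold rel, abic, zform. simpl. rewrite <- !app_assoc. simpl.
  rewrite sf_app. simpl. rewrite sf_app. simpl. rewrite <- !app_assoc. simpl. reflexivity.
Qed.

Lemma fm_S : forall j, fm (repeat gb (S j)) = fm (repeat gb j) ++ [N 1; T gb].
Proof. intros. change (repeat gb (S j)) with (gb :: repeat gb j). rewrite repeat_cons. unfold fm. rewrite flat_map_app. reflexivity. Qed.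

Lemma zform_S : forall j, zform (S j) = [N 1; T gb] ++ zform j ++ [T gb; N 1].
Proof.
  intros. unfold zform. rewrite fm_S at 2. simpl. repeat (rewrite <- app_assoc; simpl). reflexivity.
Qed.

Lemma der3 : forall a b c w, derives G (a ++ b ++ c) w ->
  exists w1 w2 w3, w = w1 ++ w2 ++ w3 /\ derives G a w1 /\ derives G b w2 /\ derives G c w3.
Proof.
  intros. apply derives_app_inv in H. destruct H as (w1 & w' & -> & D1 & D').
  apply derives_app_inv in D'. destruct D' as (w2 & w3 & -> & D2 & D3).
  exists w1, w2, w3. auto.
Qed.

Lemma zform_Z : forall j u, 1 <= j -> derives G (zform j) u -> derives G [N 2] u.
Proof.
  induction j; intros. lia.
  destruct j.
  - apply derives_nt with (rhs := [N 1; T gb; N 1; T gc; N 1; T ga; N 1; T gb; N 1]).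
    simpl; tauto. exact H0.
  - rewrite zform_S in H0. apply der3 in H0. destruct H0 as (w1 & w2 & w3 & -> & D1 & D2 & D3).
    apply IHj in D2; [|lia].
    apply derives_nt with (rhs := [N 1; T gb; N 2; T gb; N 1]). simpl; tauto.
    change [N 1; T gb; N 2; T gb; N 1] with ([N 1; T gb] ++ [N 2] ++ [T gb; N 1]).
    repeat apply derives_app; auto.
Qed.

Lemma zformR_Z : forall j u, 1 <= j -> derives G (rev (map tw (zform j))) u -> derives G [N 4] u.
Proof.
  induction j; intros. lia.
  destruct j.
  - apply derives_nt with (rhs := [N 3; T gb; N 3; T ga; N 3; T gc; N 3; T gb; N 3]).
    simpl; tauto. exact H0.
  - rewrite zform_S in H0. rewrite !map_app, !rev_app_distr in H0. rewrite <- app_assoc in H0.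
    apply der3 in H0. destruct H0 as (w1 & w2 & w3 & -> & D1 & D2 & D3).
    apply IHj in D2; [|lia].
    apply derives_nt with (rhs := [N 3; T gb; N 4; T gb; N 3]). simpl; tauto.
    change [N 3; T gb; N 4; T gb; N 3] with ([N 3; T gb] ++ [N 4] ++ [T gb; N 3]).
    repeat apply derives_app; auto.
Qed.

Lemma compl_mut :
  (forall w, Ep w -> derives G [N 1] (map Some w) /\ derives G [N 3] (map Some (rev w))) /\
  (forall s w, Slp s w -> derives G (slotform s) (map Some w) /\ derives G (rev (map tw (slotform s))) (map Some (rev w))).
Proof.
  apply (Ep_mut
    (fun w _ => derives G [N 1] (map Some w) /\ derives G [N 3] (map Some (rev w)))
    (fun s w _ => derives G (slotform s) (map Some w) /\ derives G (rev (map tw (slotform s))) (map Some (rev w)))).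
  - split; apply derives_nt with (rhs := []); simpl; try tauto; constructor.
  - intros j w1 w2 Hj S1 [IH1 IH1'] E2 [IH2 IH2']. split.
    + rewrite sf_rel in IH1. apply der3 in IH1. destruct IH1 as (x1 & x2 & x3 & Hx & D1 & D2 & D3).
      apply zform_Z in D2; auto.
      apply derives_nt with (rhs := [N 1; T ga; N 2; T gc; N 1; N 1]). simpl; tauto.
      rewrite map_app, Hx.
      change [N 1; T ga; N 2; T gc; N 1; N 1] with ([N 1; T ga] ++ ([N 2] ++ ([T gc; N 1] ++ [N 1]))).
      replace ((x1++x2++x3) ++ map Some w2) with (x1 ++ (x2 ++ (x3 ++ map Some w2))) by (repeat rewrite <- app_assoc; auto).
      repeat apply derives_app; auto.
    + rewrite sf_rel in IH1'. rewrite !map_app, !rev_app_distr in IH1'. rewrite <- app_assoc in IH1'.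
      apply der3 in IH1'. destruct IH1' as (x1 & x2 & x3 & Hx & D1 & D2 & D3).
      apply zformR_Z in D2; auto.
      apply derives_nt with (rhs := [N 3; N 3; T gc; N 4; T ga; N 3]). simpl; tauto.
      rewrite rev_app_distr, map_app, Hx.
      change [N 3; N 3; T gc; N 4; T ga; N 3] with ([N 3] ++ ([N 3; T gc] ++ ([N 4] ++ [T ga; N 3]))).
      repeat apply derives_app; auto.
  - intros e E [IH IH']. simpl. auto.
  - intros t s e w E [IHe IHe'] S [IHs IHs']. split.
    + simpl. rewrite map_app. simpl.
      change (N 1 :: T t :: slotform s) with ([N 1] ++ [T t] ++ slotform s).
      apply derives_app; auto. change (Some t :: map Some w) with ([Some t] ++ map Some w).
      apply derives_app; auto. apply derives_t.
    + simpl. rewrite rev_app_distr, map_app. simpl. rewrite map_app. simpl.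
      apply derives_app; auto. apply derives_app; auto. apply derives_t.
Qed.

Lemma S_compl : forall z u v, Slp z u -> Slp z v -> derives G [N 0] (map Some u ++ None :: map Some (rev v)).
Proof.
  destruct compl_mut as [CE CS].
  induction z; intros u v Hu Hv.
  - inversion Hu; subst. inversion Hv; subst.
    apply derives_nt with (rhs := [N 1; Hs; N 3]). simpl; tauto.
    change [N 1; Hs; N 3] with ([N 1] ++ [Hs] ++ [N 3]).
    change (None :: map Some (rev v)) with ([None] ++ map Some (rev v)).
    apply derives_app. apply CE; auto. apply derives_app. apply derives_t. apply CE; auto.
  - inversion Hu; subst. inversion Hv; subst.
    apply derives_nt with (rhs := [N 1; T a; N 0; T a; N 3]). destruct a; simpl; tauto.
    replace (map Some (e ++ a :: w) ++ None :: map Some (rev (e0 ++ a :: w0)))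
      with (map Some e ++ [Some a] ++ (map Some w ++ None :: map Some (rev w0)) ++ [Some a] ++ map Some (rev e0)).
    + change [N 1; T a; N 0; T a; N 3] with ([N 1] ++ [T a] ++ [N 0] ++ [T a] ++ [N 3]).
      repeat apply derives_app; try apply derives_t. apply CE; auto. apply IHz; auto. apply CE; auto.
    + rewrite ?map_app, ?rev_app_distr; simpl; rewrite ?map_app; simpl. repeat (rewrite <- app_assoc; simpl). reflexivity.
Qed.

Definition zw (j : nat) : word := repeat gb j ++ gc :: ga :: repeat gb j.

Definition symsem (x : sym) (w : list (option gen)) : Prop :=
  match x with
  | inr t => w = [t]
  | inl 0 => pi2_word_problem w
  | inl 1 => exists u, w = map Some u /\ pi2_eq u []
  | inl 2 => exists j u, 1 <= j /\ w = map Some u /\ pi2_eq u (zw j)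
  | inl 3 => exists u, w = map Some (rev u) /\ pi2_eq u []
  | inl 4 => exists j u, 1 <= j /\ w = map Some (rev u) /\ pi2_eq u (zw j)
  | inl _ => False
  end.

Fixpoint sem (s : list sym) (w : list (option gen)) : Prop :=
  match s with
  | [] => w = []
  | x :: s' => exists w1 w2, w = w1 ++ w2 /\ symsem x w1 /\ sem s' w2
  end.

Lemma pi2_cons : forall x a b, pi2_eq a b -> pi2_eq (x :: a) (x :: b).
Proof. intros. apply (pi2_app [x] [x]); auto. apply pi2_refl. Qed.

Ltac pi2_solve := repeat first [ assumption | apply pi2_refl | apply pi2_cons | apply pi2_app ].

Ltac lsolve := repeat progress (simpl; rewrite ?map_app, ?rev_app_distr, ?app_nil_r);
  repeat (rewrite <- app_assoc; simpl); reflexivity.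

Lemma zw_S : forall j, zw (S j) = [gb] ++ zw j ++ [gb].
Proof.
  intros. unfold zw. change (repeat gb (S j)) with (gb :: repeat gb j) at 2. rewrite repeat_cons.
  simpl. repeat (rewrite <- app_assoc; simpl). reflexivity.
Qed.

Lemma rel_zw : forall j, rel j = [ga] ++ zw j ++ [gc].
Proof. intros. unfold rel, abic, zw. simpl. repeat (rewrite <- app_assoc; simpl). reflexivity. Qed.

Ltac dsem := repeat match goal with
  | H : sem (_ :: _) _ |- _ => let w1 := fresh "w" in let w2 := fresh "w" in
      let He := fresh "He" in let Hs1 := fresh "Hs" in
      destruct H as (w1 & w2 & He & Hs1 & H); simpl in Hs1; subst
  | H : sem [] _ |- _ => simpl in H; subst
  | H : exists _, _ |- _ => destruct H
  | H : _ /\ _ |- _ => destruct H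
  end.

Lemma prod_sound : forall X rhs w, In (X, rhs) prods -> sem rhs w -> symsem (inl X) w.
Proof.
  intros X rhs w Hin Hs.
  simpl in Hin. repeat destruct Hin as [Hin|Hin]; try contradiction; inversion Hin; subst; clear Hin;
    dsem; simpl; subst.
  - exists x0, x. split. lsolve. apply pi2_trans with []; auto. apply pi2_sym; auto.
  - unfold pi2_word_problem in *. destruct Hs1 as (u & v & -> & Huv).
    exists (x0 ++ ga :: u), (x ++ ga :: v). split. lsolve.
    apply pi2_trans with ([] ++ ga :: u). pi2_solve. apply pi2_trans with ([] ++ ga :: v).
    pi2_solve. apply pi2_sym. pi2_solve.
  - unfold pi2_word_problem in *. destruct Hs1 as (u & v & -> & Huv).
    exists (x0 ++ gb :: u), (x ++ gb :: v). split. lsolve.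
    apply pi2_trans with ([] ++ gb :: u). pi2_solve. apply pi2_trans with ([] ++ gb :: v).
    pi2_solve. apply pi2_sym. pi2_solve.
  - unfold pi2_word_problem in *. destruct Hs1 as (u & v & -> & Huv).
    exists (x0 ++ gc :: u), (x ++ gc :: v). split. lsolve.
    apply pi2_trans with ([] ++ gc :: u). pi2_solve. apply pi2_trans with ([] ++ gc :: v).
    pi2_solve. apply pi2_sym. pi2_solve.
  - exists []. split; auto. apply pi2_refl.
  - exists (x3 ++ ga :: x2 ++ gc :: x0 ++ x). split. lsolve.
    apply pi2_trans with (rel x1); [|apply pi2_rel_nil; auto]. rewrite rel_zw.
    replace ([ga] ++ zw x1 ++ [gc]) with ([] ++ ga :: zw x1 ++ gc :: [] ++ []) by lsolve. pi2_solve.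
  - exists (S x0), (x2 ++ gb :: x1 ++ gb :: x). split. lia. split. lsolve.
    rewrite zw_S. replace ([gb] ++ zw x0 ++ [gb]) with ([] ++ gb :: zw x0 ++ gb :: []) by lsolve. pi2_solve.
  - exists 1, (x3 ++ gb :: x2 ++ gc :: x1 ++ ga :: x0 ++ gb :: x). split. lia. split. lsolve.
    change (zw 1) with ([] ++ gb :: [] ++ gc :: [] ++ ga :: [] ++ gb :: []). pi2_solve.
  - exists []. split; auto. apply pi2_refl.
  - exists (x ++ ga :: x1 ++ gc :: x2 ++ x3). split. lsolve.
    apply pi2_trans with (rel x0); [|apply pi2_rel_nil; auto]. rewrite rel_zw.
    replace ([ga] ++ zw x0 ++ [gc]) with ([] ++ ga :: zw x0 ++ gc :: [] ++ []) by lsolve. pi2_solve.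
  - exists (S x0), (x ++ gb :: x1 ++ gb :: x2). split. lia. split. lsolve.
    rewrite zw_S. replace ([gb] ++ zw x0 ++ [gb]) with ([] ++ gb :: zw x0 ++ gb :: []) by lsolve. pi2_solve.
  - exists 1, (x ++ gb :: x0 ++ gc :: x1 ++ ga :: x2 ++ gb :: x3). split. lia. split. lsolve.
    change (zw 1) with ([] ++ gb :: [] ++ gc :: [] ++ ga :: [] ++ gb :: []). pi2_solve.
Qed.

Lemma derives_sem : forall s w, derives G s w -> sem s w.
Proof.
  induction 1; simpl.
  - auto.
  - exists [t], w. auto.
  - exists w1, w2. split; auto. split; auto. eapply prod_sound; eauto.
Qed.

Theorem cf_part : context_free pi2_word_problem.
Proof.
  exists G. intro w. split.
  - intros (u & v & -> & Huv). unfold cfg_lang. simpl.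
    apply S_compl with (z := nf u). apply Slp_nf. rewrite (nf_eq _ _ Huv). apply Slp_nf.
  - intro H. apply derives_sem in H. simpl in H. destruct H as (w1 & w2 & -> & Hw & ->).
    rewrite app_nil_r. auto.
Qed.

Inductive Cut : word -> word -> Prop :=
| Cut_nil : Cut [] []
| Cut_step M h p s j : Cut M h -> p ++ s = rel j -> 1 <= j -> p <> [] -> s <> [] -> Cut (p ++ M) (h ++ s).

Lemma stack_cut : forall v, irr v -> forall rs0, exists h t M rs1,
  v = h ++ t /\ rev rs0 = rev rs1 ++ M /\ Cut M h /\ fold_left pushr v rs0 = rev t ++ rs1.
Proof.
  induction v as [|x v IH] using rev_ind; intros Hirr rs0.
  - exists [], [], [], rs0. repeat split; auto. rewrite app_nil_r; auto. constructor.
  - destruct (IH (irr_prefix _ _ Hirr) rs0) as (h & t & M & rs1 & Hv & Hrs & HC & Hf).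
    rewrite fold_left_app, Hf. simpl.
    assert (Hno : exists h0 t0 M0 rs2, v ++ [x] = h0 ++ t0 /\ rev rs0 = rev rs2 ++ M0 /\ Cut M0 h0 /\
                    x :: rev t ++ rs1 = rev t0 ++ rs2).
    { exists h, (t ++ [x]), M, rs1. repeat split; auto. rewrite Hv, app_assoc; auto.
      rewrite rev_app_distr. simpl. auto. }
    unfold pushr. destruct x; auto.
    destruct (reduce_c (rev t ++ rs1)) eqn:E; auto.
    apply reduce_c_spec in E. destruct E as [j [Hj E]].
    assert (Heq : rev rs1 ++ (t ++ [gc]) = rev l ++ rel j).
    { rewrite <- rev_relR, <- E, rev_app_distr, rev_involutive, app_assoc. auto. }
    apply app_eq_app in Heq. destruct Heq as [l0 [[H1 H2]|[H1 H2]]].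
    +
      destruct l0 as [|y l0].
      * exfalso. rewrite app_nil_r in H1. simpl in H2. apply (Hirr h [] j Hj). rewrite Hv, H2.
        rewrite app_nil_r, app_assoc. auto.
      * exists (h ++ t ++ [gc]), [], ((y :: l0) ++ M), l. repeat split.
        -- rewrite app_nil_r, Hv, app_assoc. auto.
        -- rewrite Hrs, H1, app_assoc. auto.
        -- econstructor; eauto. discriminate. destruct t; discriminate.
    + exfalso. apply (Hirr (h ++ l0) [] j Hj). rewrite Hv, <- app_assoc, H2, app_nil_r, app_assoc. auto.
Qed.

Inductive PC : word -> Prop :=
| PC_nil : PC []
| PC_cons p s j rest : p ++ s = rel j -> 1 <= j -> p <> [] -> s <> [] -> PC rest -> PC (p ++ rest).

Inductive SC : word -> Prop :=
| SC_nil : SC []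
| SC_cons p s j rest : p ++ s = rel j -> 1 <= j -> p <> [] -> s <> [] -> SC rest -> SC (s ++ rest).

Lemma SC_snoc : forall h, SC h -> forall p s j, p ++ s = rel j -> 1 <= j -> p <> [] -> s <> [] -> SC (h ++ s).
Proof.
  induction 1 as [|p0 s0 j0 rest Hps0 Hj0 Hp0 Hs0 HSC IH]; intros p s j Hps Hj Hp Hs.
  - simpl. rewrite <- (app_nil_r s). econstructor; eauto. constructor.
  - rewrite <- app_assoc. econstructor; eauto.
Qed.

Lemma Cut_PC_SC : forall M h, Cut M h -> PC M /\ SC h.
Proof.
  induction 1. split; constructor. destruct IHCut. split. econstructor; eauto. eapply SC_snoc; eauto.
Qed.

Lemma PC_inv : forall z, PC z -> z = [] \/ exists p s j rest, z = p ++ rest /\ p ++ s = rel j /\ 1 <= j /\ p <> [] /\ s <> [] /\ PC rest.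
Proof. destruct 1; [left; auto | right; exists p, s, j, rest; repeat split; auto]. Qed.

Lemma SC_inv : forall z, SC z -> z = [] \/ exists p s j rest, z = s ++ rest /\ p ++ s = rel j /\ 1 <= j /\ p <> [] /\ s <> [] /\ SC rest.
Proof. destruct 1; [left; auto | right; exists p, s, j, rest; repeat split; auto]. Qed.

Lemma rel_head : forall p s j, p ++ s = rel j -> p <> [] -> exists p0, p = ga :: p0.
Proof. intros. destruct p; [contradiction|]. unfold rel, abic in H. simpl in H. inversion H. eauto. Qed.

Lemma ga_notin_Bc : forall j, ~ In ga (repeat gb j ++ [gc]).
Proof. intros j H. apply in_app_or in H. destruct H as [H|[H|H]]; try discriminate; auto.
  apply repeat_spec in H. discriminate. Qed.

Lemma abic_eq : forall j, abic j = ga :: (repeat gb j ++ [gc]).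
Proof. reflexivity. Qed.

Lemma suffix_a : forall p s0 j, p ++ ga :: s0 = rel j -> p <> [] -> ga :: s0 = abic j.
Proof.
  intros. unfold rel in H. rewrite (abic_eq j) in H at 2.
  apply app_eq_app in H. destruct H as [l [[H1 H2]|[H1 H2]]].
  - destruct l as [|y l].
    + simpl in H2. inversion H2. rewrite abic_eq. auto.
    + exfalso. simpl in H2. inversion H2; subst.
      apply (ga_notin_Bc j). match goal with H : repeat gb j ++ [gc] = _ |- _ => rewrite H end. apply in_elt.
  - destruct l as [|y l].
    + simpl in H2. inversion H2. rewrite abic_eq. auto.
    + exfalso. simpl in H2. inversion H2; subst.
      destruct p as [|z p]; [contradiction|]. rewrite abic_eq in H1. simpl in H1. inversion H1; subst.
      apply (ga_notin_Bc j). match goal with H : repeat gb j ++ [gc] = _ |- _ => rewrite H end. apply in_elt.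
Qed.

Lemma allb_contra : forall q B r1 r2, Forall (eq gb) q -> Forall (eq gb) B ->
  q ++ r1 = B ++ gc :: r2 -> (r1 = [] \/ exists r, r1 = ga :: r) -> False.
Proof.
  induction q; intros B r1 r2 Hq HB H Hr.
  - simpl in H. subst r1. destruct Hr as [Hr|[r Hr]].
    + destruct B; discriminate.
    + destruct B as [|b B]; simpl in Hr; inversion Hr. inversion HB; subst. discriminate.
  - inversion Hq; subst. destruct B as [|b B].
    + simpl in H. inversion H.
    + simpl in H. inversion H; subst. inversion HB; subst. eapply IHq; eauto.
Qed.

Lemma Forall_repeat_b : forall j, Forall (eq gb) (repeat gb j).
Proof. induction j; simpl; constructor; auto. Qed.

Lemma PC_head : forall r, PC r -> r = [] \/ exists r', r = ga :: r'.
Proof.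
  intros. apply PC_inv in H. destruct H as [H|(p & s & j & rest & -> & H1 & _ & H2 & _)]; auto.
  right. destruct (rel_head _ _ _ H1 H2) as [p0 ->]. simpl. eauto.
Qed.

Lemma pc_peel : forall p' s' j' rest' j rest, p' ++ s' = rel j' -> 1 <= j' -> p' <> [] -> s' <> [] -> PC rest' ->
  p' ++ rest' = abic j ++ rest -> PC rest.
Proof.
  intros p' s' j' rest' j rest H Hj' Hp Hs HPC Heq.
  unfold rel in H. apply app_eq_app in H. destruct H as [l [[H1 H2]|[H1 H2]]].
  -
    subst p'. rewrite <- app_assoc in Heq. apply abic_app_inj in Heq. destruct Heq as [<- <-].
    destruct l as [|y l]; [exact HPC|].
    apply PC_cons with (s := s' ++ abic j') (j := j'); auto.
    + unfold rel. rewrite app_assoc, <- H2. auto.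
    + discriminate.
    + destruct s'; [contradiction| discriminate].
  -
    destruct l as [|y l].
    + rewrite app_nil_r in H1. subst p'. apply abic_app_inj in Heq. destruct Heq as [_ <-]. auto.
    + exfalso. destruct p' as [|z q]; [contradiction|].
      rewrite abic_eq in H1. simpl in H1. inversion H1; subst z.
      assert (Hq : Forall (eq gb) q).
      { apply app_eq_app in H3. destruct H3 as [l0 [[H5 H6]|[H5 H6]]].
        - pose proof (Forall_repeat_b j') as F. rewrite H5 in F. apply Forall_app in F. tauto.
        - destruct l0 as [|w l0].
          + rewrite app_nil_r in H5. subst q. apply Forall_repeat_b.
          + simpl in H6. inversion H6. destruct l0; discriminate. }
      rewrite abic_eq in Heq. simpl in Heq. inversion Heq as [H0]. rewrite <- app_assoc in H0. simpl in H0.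
      eapply (allb_contra q (repeat gb j) rest' rest); eauto. apply Forall_repeat_b. apply PC_head; auto.
Qed.

Lemma peel : forall n z, length z <= n -> PC z -> SC z ->
  exists js, Forall (fun j => 1 <= j) js /\ z = concat (map abic js).
Proof.
  induction n; intros z Hl HPC HSC.
  - destruct z; [|simpl in Hl; lia]. exists []. auto.
  - apply SC_inv in HSC. destruct HSC as [->|(p & s & j & rest & -> & Hps & Hj & Hp & Hs & HSC)].
    + exists []. auto.
    + apply PC_inv in HPC. destruct HPC as [Hn|(p' & s' & j' & rest' & Heq & Hps' & Hj' & Hp' & Hs' & HPC')].
      * destruct s; [contradiction | discriminate].
      * destruct (rel_head _ _ _ Hps' Hp') as [p0 ->].
        destruct s as [|y s1]; [contradiction|].
        simpl in Heq. inversion Heq; subst y.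
        pose proof (suffix_a _ _ _ Hps Hp) as Ha.
        assert (Heq2 : (ga :: p0) ++ rest' = abic j ++ rest) by (rewrite <- Ha; simpl; congruence).
        assert (PC rest) by (eapply pc_peel with (p' := ga :: p0); eauto).
        destruct (IHn rest) as (js & F & ->); auto.
        { rewrite Ha in Hl. rewrite length_app in Hl. unfold abic in Hl. simpl in Hl. lia. }
        exists (j :: js). split. constructor; auto. rewrite Ha. reflexivity.
Qed.

Lemma nf_idem : forall x, nf (nf x) = nf x.
Proof. intros. symmetry. apply nf_eq. apply pi2_nf. Qed.

Lemma rev_nil_iff : forall (l : list gen), rev l = [] -> l = [].
Proof. intros. rewrite <- (rev_involutive l), H. auto. Qed.

Lemma unit_nf : forall x, pi2_unit x -> exists js, Forall (fun j => 1 <= j) js /\ nf x = concat (map abic js).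
Proof.
  intros x [[w' Hl] [w Hr]].
  set (z := nf x).
  assert (Hz : irr z) by apply nf_irr.
  assert (HSC : SC z).
  { assert (E : nf (w' ++ z) = []).
    { rewrite (nf_eq (w' ++ z) (w' ++ x)). rewrite (nf_eq _ _ Hl). reflexivity.
      apply pi2_app. apply pi2_refl. apply pi2_sym, pi2_nf. }
    change (rev (nfr (w' ++ z)) = []) in E. apply rev_nil_iff in E. rewrite nfr_app in E.
    destruct (stack_cut z Hz (nfr w')) as (h & t & M & rs1 & Hv & _ & HC & Hf).
    rewrite Hf in E. apply app_eq_nil in E. destruct E as [Et _]. apply rev_nil_iff in Et. subst t.
    rewrite app_nil_r in Hv. rewrite Hv. apply (Cut_PC_SC _ _ HC). }
  assert (HPC : PC z).
  { assert (E : nf (z ++ nf w) = []).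
    { rewrite (nf_eq (z ++ nf w) (x ++ w)). rewrite (nf_eq _ _ Hr). reflexivity.
      apply pi2_app; apply pi2_sym, pi2_nf. }
    change (rev (nfr (z ++ nf w)) = []) in E. apply rev_nil_iff in E. rewrite nfr_app in E.
    destruct (stack_cut (nf w) (nf_irr w) (nfr z)) as (h & t & M & rs1 & _ & Hrs & HC & Hf).
    rewrite Hf in E. apply app_eq_nil in E. destruct E as [_ Er]. subst rs1.
    simpl in Hrs. change (rev (nfr z)) with (nf z) in Hrs. unfold z in Hrs. rewrite nf_idem in Hrs.
    fold z in Hrs. rewrite Hrs. apply (Cut_PC_SC _ _ HC). }
  apply (peel (length z)); auto.
Qed.

Lemma abic_len : forall j, length (abic j) = j + 2.
Proof. intros. unfold abic. rewrite !length_app, repeat_length. simpl. lia. Qed.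

Lemma In_len : forall j js, In j js -> j + 2 <= length (concat (map abic js)).
Proof.
  induction js; intros H; [contradiction|].
  change (concat (map abic (a :: js))) with (abic a ++ concat (map abic js)). rewrite length_app. destruct H.
  - subst. rewrite abic_len. lia.
  - specialize (IHjs H). lia.
Qed.

Lemma inv_PS : forall js, Forall (fun j => 1 <= j) js ->
  pi2_eq (concat (map abic js) ++ concat (map abic (rev js))) [].
Proof.
  induction js; intros F. apply pi2_refl.
  inversion F; subst. change (concat (map abic (a::js))) with (abic a ++ concat (map abic js)).
  change (rev (a :: js)) with (rev js ++ [a]).
  rewrite map_app, concat_app. change (concat (map abic [a])) with (abic a ++ []). rewrite app_nil_r.
  replace ((abic a ++ concat (map abic js)) ++ concat (map abic (rev js)) ++ abic a)
    with (abic a ++ (concat (map abic js) ++ concat (map abic (rev js))) ++ abic a)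
    by (repeat rewrite <- app_assoc; auto).
  apply pi2_trans with (abic a ++ [] ++ abic a).
  - apply pi2_app. apply pi2_refl. apply pi2_app. auto. apply pi2_refl.
  - apply pi2_rel_nil. auto.
Qed.

Lemma nf_abic : forall j, 1 <= j -> nf (abic j) = abic j.
Proof.
  intros. unfold nf, nfr. rewrite push_abic.
  destruct (reduce_c (repeat gb j ++ [ga])) eqn:E.
  - apply reduce_abic in E; auto. discriminate.
  - simpl. rewrite rev_app_distr, rev_repeat. reflexivity.
Qed.

Lemma abic_suffix_inj : forall X Y j j', X ++ abic j = Y ++ abic j' -> X = Y /\ j = j'.
Proof.
  intros. rewrite !abic_eq in H. apply split1 in H; try apply ga_notin_Bc.
  destruct H as [H1 H2]. apply app_inj_tail in H2. destruct H2 as [H2 _]. apply repeat_inj in H2. auto.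
Qed.

Lemma concat_snoc : forall js' Y j, concat (map abic js') = Y ++ abic j ->
  exists js'', js' = js'' ++ [j] /\ Y = concat (map abic js'').
Proof.
  intros js'. destruct js' as [|j0 js0] using rev_ind; intros Y j H.
  - simpl in H. destruct Y; discriminate.
  - rewrite map_app, concat_app in H. simpl in H. rewrite app_nil_r in H.
    apply abic_suffix_inj in H. destruct H as [H1 H2]. subst. eauto.
Qed.

Lemma nfr_PS : forall N js, Forall (fun j => 1 <= j < N) js -> exists js',
  Forall (fun j => 1 <= j < N) js' /\ nfr (concat (map abic js)) = rev (concat (map abic js')).
Proof.
  intros N js. induction js as [|j js IH] using rev_ind; intros F.
  - exists []. auto.
  - apply Forall_app in F. destruct F as [F1 F2]. inversion F2; subst.
    destruct (IH F1) as (js' & F' & E).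
    rewrite map_app, concat_app. change (concat (map abic [j])) with (abic j ++ []). rewrite app_nil_r, nfr_app, E, push_abic.
    destruct (reduce_c (repeat gb j ++ ga :: rev (concat (map abic js')))) eqn:R.
    + apply reduce_abic in R; [|lia].
      assert (concat (map abic js') = rev l ++ abic j).
      { rewrite <- (rev_involutive (concat (map abic js'))), R. simpl.
        rewrite rev_app_distr, rev_repeat. simpl. repeat (rewrite <- app_assoc; simpl). reflexivity. }
      apply concat_snoc in H. destruct H as (js'' & -> & Hl).
      exists js''. apply Forall_app in F'. split. tauto. rewrite <- Hl, rev_involutive. auto.
    + exists (js' ++ [j]). split. apply Forall_app. split; auto.
      rewrite map_app, concat_app. change (concat (map abic [j])) with (abic j ++ []). rewrite app_nil_r, rev_app_distr. unfold abic.
      simpl. rewrite rev_app_distr, rev_repeat. simpl. repeat (rewrite <- app_assoc; simpl). reflexivity.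
Qed.

Definition PSN N q := exists js, Forall (fun j => 1 <= j < N) js /\ q = concat (map abic js).

Lemma sumlen_ge : forall (S : list word) s, In s S -> length s <= fold_right (fun s n => length s + n) 0 S.
Proof. induction S; simpl; intros; [contradiction|]. destruct H; subst; [lia|]. specialize (IHS s H). lia. Qed.

Theorem non_fg : ~ pi2_units_fin_gen.
Proof.
  intros (S & HS & Hgen).
  set (N := Datatypes.S (fold_right (fun s n => length s + n) 0 S)).
  assert (HSN : forall s, In s S -> PSN N (nf s)).
  { intros s Hs. destruct (unit_nf s (HS s Hs)) as (js & F & E). exists js. split; auto.
    apply Forall_forall. intros j Hj. rewrite Forall_forall in F. split. apply F; auto.
    pose proof (In_len j js Hj). rewrite <- E in H. pose proof (red_len _ _ (red_nf s)).
    pose proof (sumlen_ge S s Hs). unfold N. lia. }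
  assert (Hw : forall w, In w S \/ inverse_of_some S w -> exists q, PSN N q /\ pi2_eq w q).
  { intros w [Hw|(s & Hs & H1 & H2)].
    - exists (nf w). split. apply HSN; auto. apply pi2_nf.
    - destruct (HSN s Hs) as (js & F & E).
      exists (concat (map abic (rev js))). split.
      + exists (rev js). split; auto. apply Forall_rev. auto.
      + assert (Hsq : pi2_eq (s ++ concat (map abic (rev js))) []).
        { apply pi2_trans with (nf s ++ concat (map abic (rev js))).
          apply pi2_app. apply pi2_nf. apply pi2_refl. rewrite E. apply inv_PS.
          eapply Forall_impl; [|exact F]. simpl. intros; lia. }
        apply pi2_trans with (w ++ s ++ concat (map abic (rev js))).
        * rewrite <- (app_nil_r w) at 1. apply pi2_app. apply pi2_refl. apply pi2_sym. auto.
        * rewrite app_assoc. rewrite <- (app_nil_l (concat (map abic (rev js)))) at 2.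
          apply pi2_app. auto. apply pi2_refl. }
  assert (Hcat : forall ws, (forall w, In w ws -> In w S \/ inverse_of_some S w) ->
                  exists q, PSN N q /\ pi2_eq (concat ws) q).
  { induction ws; intros H.
    - exists []. split. exists []. auto. apply pi2_refl.
    - destruct (Hw a (H a (or_introl eq_refl))) as (q1 & (js1 & F1 & E1) & P1).
      destruct IHws as (q2 & (js2 & F2 & E2) & P2). intros; apply H; right; auto.
      exists (q1 ++ q2). split.
      + exists (js1 ++ js2). split. apply Forall_app; auto. rewrite map_app, concat_app. subst. auto.
      + simpl. apply pi2_app; auto. }
  assert (HN : 1 <= N) by (unfold N; lia).
  assert (Hu : pi2_unit (abic N)).
  { split; exists (abic N); apply pi2_rel_nil; auto. }
  destruct (Hgen _ Hu) as (ws & Hws & Hx).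
  destruct (Hcat ws Hws) as (q & (js & F & ->) & Hq).
  assert (E : nf (abic N) = nf (concat (map abic js))) by (apply nf_eq; eapply pi2_trans; eauto).
  rewrite nf_abic in E; auto.
  destruct (nfr_PS N js F) as (js' & F' & E').
  unfold nf in E. rewrite E', rev_involutive in E.
  destruct js' as [|j js'].
  - discriminate.
  - simpl in E. rewrite <- (app_nil_r (abic N)) in E. apply abic_app_inj in E. destruct E as [E _].
    inversion F'. subst. lia.
Qed.

Theorem mainTheorem10 :
  context_free pi2_word_problem /\ ~ pi2_units_fin_gen.
Proof.
  split. exact cf_part. exact non_fg.
Qed.
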